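(* Let $G$ be a connected bipartite graph with $n\ge 2$ vertices, $m$ edges and Randi\'c index $R=R(G)$. Then $$EE(G) \ge 2\cosh\left(\frac{m}{R}\right) + (n-2),$$ with equality if and only if $G$ is isomorphic to a complete bipartite graph $K_{p,q}$ with $p+q=n$.
   Context: All graphs are finite, simple and undirected. For a graph $G$ with adjacency matrix $A(G)$ having eigenvalues $\lambda_1\ge\cdots\ge\lambda_n$, the Estrada index is $EE(G)=\sum_{i=1}^n e^{\lambda_i}$. Writing $d(i)$ for the degree of vertex $i$ and $\mathcal{E}(G)$ for the edge set, the Randi\'c index is $R(G)=\sum_{ij\in\mathcal{E}(G)}(d(i)d(j))^{-1/2}$. $K_{p,q}$ ($p,q\ge1$) is the complete bipartite graph with parts of sizes $p$ and $q$. *)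

(* Defs.v *)
From Stdlib Require Import Reals Lra Lia Arith.
Open Scope R_scope.

(* A graph on the vertex set {0,...,n-1} is given by a boolean adjacency
   relation adj, required to be symmetric and irreflexive on that range. *)
Definition is_graph (n : nat) (adj : nat -> nat -> bool) : Prop :=
  (forall i j, (i < n)%nat -> (j < n)%nat -> adj i j = adj j i) /\
  (forall i, (i < n)%nat -> adj i i = false).

Fixpoint sumR (n : nat) (f : nat -> R) : R :=
  match n with
  | O => 0
  | S k => sumR k f + f k
  end.

Fixpoint countN (n : nat) (P : nat -> bool) : nat :=
  match n with
  | O => O
  | S k => (countN k P + (if P k then 1 else 0))%nat
  end.

Definition deg (n : nat) (adj : nat -> nat -> bool) (i : nat) : nat :=
  countN n (fun j => adj i j).

Fixpoint sumN (n : nat) (f : nat -> nat) : nat :=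
  match n with
  | O => O
  | S k => (sumN k f + f k)%nat
  end.

Definition num_edges (n : nat) (adj : nat -> nat -> bool) : nat :=
  sumN n (fun i => countN i (fun j => adj j i)).

Definition randic (n : nat) (adj : nat -> nat -> bool) : R :=
  sumR n (fun i => sumR i (fun j =>
    if adj j i then / sqrt (INR (deg n adj i) * INR (deg n adj j)) else 0)).

Definition adjmat (adj : nat -> nat -> bool) (i j : nat) : R :=
  if adj i j then 1 else 0.

(* lam_0, ..., lam_{n-1} is the list of eigenvalues of A(G) (with
   multiplicities): A(G) has an orthonormal eigenbasis v_0,...,v_{n-1} of R^n
   with A(G) v_k = lam_k v_k. (A(G) is real symmetric, so by the spectral
   theorem this determines the eigenvalue multiset.) *)
Definition adj_spectrum (n : nat) (adj : nat -> nat -> bool) (lam : nat -> R) : Prop :=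
  exists v : nat -> nat -> R,
    (forall k l, (k < n)%nat -> (l < n)%nat ->
       sumR n (fun t => v k t * v l t) = if Nat.eqb k l then 1 else 0) /\
    (forall k i, (k < n)%nat -> (i < n)%nat ->
       sumR n (fun j => adjmat adj i j * v k j) = lam k * v k i).

Definition estrada (n : nat) (lam : nat -> R) : R :=
  sumR n (fun i => exp (lam i)).

Inductive reach (n : nat) (adj : nat -> nat -> bool) (i : nat) : nat -> Prop :=
  | reach_refl : reach n adj i i
  | reach_step : forall j k, reach n adj i j -> (k < n)%nat -> adj j k = true ->
                 reach n adj i k.

Definition connected (n : nat) (adj : nat -> nat -> bool) : Prop :=
  forall i j, (i < n)%nat -> (j < n)%nat -> reach n adj i j.

Definition bipartite (n : nat) (adj : nat -> nat -> bool) : Prop :=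
  exists col : nat -> bool, forall i j, (i < n)%nat -> (j < n)%nat ->
    adj i j = true -> col i <> col j.

(* K_{p,q} on vertex set {0..p+q-1}: parts {0..p-1} and {p..p+q-1} *)
Definition Kpq_adj (p : nat) (i j : nat) : bool :=
  xorb (Nat.ltb i p) (Nat.ltb j p).

Definition iso_complete_bipartite (n : nat) (adj : nat -> nat -> bool) : Prop :=
  exists p q : nat, (1 <= p)%nat /\ (1 <= q)%nat /\ (p + q = n)%nat /\
    exists f : nat -> nat,
      (forall i, (i < n)%nat -> (f i < n)%nat) /\
      (forall i j, (i < n)%nat -> (j < n)%nat -> f i = f j -> i = j) /\
      (forall i j, (i < n)%nat -> (j < n)%nat -> adj i j = Kpq_adj p (f i) (f j)).

(* Main.v *)
Require Import Defs.
From Stdlib Require Import Reals Lra Lia Psatz.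
From mathcomp Require ssreflect ssrfun ssrbool eqtype ssrnat seq fintype bigop ssralg matrix Rstruct.
Open Scope R_scope.
Module Compl.
Import ssreflect ssrfun ssrbool eqtype ssrnat seq fintype bigop ssralg matrix.
Import GRing.Theory.
Import Rstruct.

Lemma sumR_big n (f : nat -> R) : sumR n f = (\sum_(i < n) f i)%R.
Proof.
elim: n => [|n IH]; first by rewrite big_ord0.
by rewrite big_ord_recr /= IH.
Qed.

Lemma complete n (v : nat -> nat -> R) :
  (forall k l, (k < n)%coq_nat -> (l < n)%coq_nat ->
     sumR n (fun t => v k t * v l t) = if Nat.eqb k l then 1 else 0) ->
  forall i j, (i < n)%coq_nat -> (j < n)%coq_nat ->
     sumR n (fun k => v k i * v k j) = if Nat.eqb i j then 1 else 0.
Proof.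
Local Open Scope ring_scope.
move=> H i j /ltP Hi /ltP Hj.
pose V : 'M[R]_n := \matrix_(k < n, t < n) v k t.
have E : (V *m V^T = 1%:M)%R.
  apply/matrixP => k l; rewrite !mxE.
  have := H k l (ltP (ltn_ord k)) (ltP (ltn_ord l)).
  rewrite sumR_big => HH.
  under eq_bigr => t _ do rewrite !mxE.
  rewrite HH.
  case: (Nat.eqb_spec k l) => [/val_inj -> | kl]; first by rewrite eqxx.
  by case: eqP => // kl'; exfalso; apply: kl; rewrite kl'.
have E2 := mulmx1C E.
have := congr1 (fun M : 'M[R]_n => M (Ordinal Hi) (Ordinal Hj)) E2.
rewrite /= !mxE sumR_big.
  under eq_bigr => t _ do rewrite !mxE.
move=> ->.
case: (Nat.eqb_spec i j) => [ij|ij].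
  have -> : Ordinal Hi = Ordinal Hj by apply: val_inj.
  by rewrite eqxx.
by case: eqP => // [[]].
Qed.
End Compl.

Lemma sumR_ext n f g : (forall i, (i < n)%nat -> f i = g i) -> sumR n f = sumR n g.
Proof. induction n; intros H; simpl; auto. rewrite IHn by (intros; apply H; lia). rewrite H by lia. auto. Qed.

Ltac sext := apply sumR_ext; intros ? ?.

Lemma sumR_plus n f g : sumR n (fun i => f i + g i) = sumR n f + sumR n g.
Proof. induction n; simpl; [lra|rewrite IHn; lra]. Qed.

Lemma sumR_scal n c f : sumR n (fun i => c * f i) = c * sumR n f.
Proof. induction n; simpl; [lra|rewrite IHn; lra]. Qed.

Lemma sumR_mult_r n c f : sumR n f * c = sumR n (fun i => f i * c).
Proof. induction n; simpl; [lra|rewrite <- IHn; lra]. Qed.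

Lemma sumR_zero n : sumR n (fun _ => 0) = 0.
Proof. induction n; simpl; [lra|rewrite IHn; lra]. Qed.

Lemma sumR_const n c : sumR n (fun _ => c) = INR n * c.
Proof. induction n; simpl sumR; [simpl; lra|rewrite IHn, S_INR; lra]. Qed.

Lemma sumR_le n f g : (forall i, (i < n)%nat -> f i <= g i) -> sumR n f <= sumR n g.
Proof. induction n; intros H; simpl; [lra|]. assert (f n <= g n) by (apply H; lia).
  assert (sumR n f <= sumR n g) by (apply IHn; intros; apply H; lia). lra. Qed.

Lemma sumR_swap n m (f : nat -> nat -> R) :
  sumR n (fun i => sumR m (fun j => f i j)) = sumR m (fun j => sumR n (fun i => f i j)).
Proof. induction n; simpl.
  - rewrite sumR_zero; auto.
  - rewrite IHn, <- sumR_plus; auto. Qed.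

Lemma sumR_nonneg n f : (forall i, (i < n)%nat -> 0 <= f i) -> 0 <= sumR n f.
Proof. intros H. rewrite <- (sumR_zero n). apply sumR_le; auto. Qed.

Lemma sumR_ge_term n f k : (forall i, (i < n)%nat -> 0 <= f i) -> (k < n)%nat -> f k <= sumR n f.
Proof. induction n; intros H Hk; [lia|]. simpl.
  assert (0 <= sumR n f) by (apply sumR_nonneg; intros; apply H; lia).
  destruct (Nat.eq_dec k n) as [->|Hne]; [lra|].
  assert (f k <= sumR n f) by (apply IHn; [intros; apply H; lia|lia]).
  assert (0 <= f n) by (apply H; lia). lra. Qed.

Lemma sumR_eq0 n f : (forall i, (i < n)%nat -> 0 <= f i) -> sumR n f = 0 ->
  forall k, (k < n)%nat -> f k = 0.
Proof. intros H H0 k Hk. assert (f k <= sumR n f) by (apply sumR_ge_term; auto).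
  assert (0 <= f k) by auto. lra. Qed.

Lemma sumR_nz n f : sumR n f <> 0 -> exists k, (k < n)%nat /\ f k <> 0.
Proof. induction n; simpl; intros H; [lra|].
  destruct (Req_dec_T (f n) 0) as [E|E].
  - destruct IHn as [k [Hk Hf]]; [lra|]. exists k; split; auto; lia.
  - exists n; split; auto. Qed.

Lemma sumR_out n i f : (n <= i)%nat -> sumR n (fun j => if Nat.eqb i j then f j else 0) = 0.
Proof. induction n; intros H; simpl; auto.
  rewrite IHn by lia. replace (Nat.eqb i n) with false. lra.
  symmetry; apply Nat.eqb_neq; lia. Qed.

Lemma sumR_delta n i f : (i < n)%nat -> sumR n (fun j => if Nat.eqb i j then f j else 0) = f i.
Proof. induction n; intros H; [lia|]. simpl.
  destruct (Nat.eq_dec i n) as [->|Hne].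
  - rewrite sumR_out by lia. rewrite Nat.eqb_refl. lra.
  - rewrite IHn by lia. replace (Nat.eqb i n) with false. lra.
    symmetry; apply Nat.eqb_neq; lia. Qed.

Lemma sumR_delta1 n i f : (i < n)%nat -> sumR n (fun j => (if Nat.eqb i j then 1 else 0) * f j) = f i.
Proof. intros H. rewrite <- (sumR_delta n i f H). sext. destruct (Nat.eqb i _); lra. Qed.

Lemma sumR_delta2 n i f : (i < n)%nat -> sumR n (fun j => (if Nat.eqb j i then 1 else 0) * f j) = f i.
Proof. intros H. rewrite <- (sumR_delta1 n i f H). sext. rewrite Nat.eqb_sym; auto. Qed.

Lemma INR_countN n P : INR (countN n P) = sumR n (fun i => if P i then 1 else 0).
Proof. induction n; simpl countN; simpl sumR; [auto|].
  rewrite plus_INR, IHn. destruct (P n); simpl; lra. Qed.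

Lemma INR_sumN n f : INR (sumN n f) = sumR n (fun i => INR (f i)).
Proof. induction n; simpl sumN; simpl sumR; [auto|]. rewrite plus_INR, IHn; auto. Qed.

Lemma sumR_sym2 n (g : nat -> nat -> R) :
  (forall i j, (i < n)%nat -> (j < n)%nat -> g i j = g j i) ->
  (forall i, (i < n)%nat -> g i i = 0) ->
  sumR n (fun i => sumR n (fun j => g i j)) = 2 * sumR n (fun i => sumR i (fun j => g j i)).
Proof. intros Hs Hd.
  assert (forall N, (N <= n)%nat -> sumR N (fun i => sumR N (fun j => g i j)) = 2 * sumR N (fun i => sumR i (fun j => g j i))).
  { induction N; intros HN; simpl; [lra|].
    rewrite sumR_plus. rewrite IHN by lia.
    assert (E: sumR N (fun j => g N j) = sumR N (fun j => g j N)) by (sext; apply Hs; lia).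
    rewrite E, Hd by lia. lra. }
  apply H; lia. Qed.

Lemma countN_mono P i j : (i <= j)%nat -> (countN i P <= countN j P)%nat.
Proof. induction j; intros H.
  - replace i with 0%nat by lia; lia.
  - destruct (Nat.eq_dec i (S j)) as [->|]; [lia|]. simpl. specialize (IHj ltac:(lia)). lia. Qed.

Lemma countN_strict P i j : P i = true -> (i < j)%nat -> (countN i P < countN j P)%nat.
Proof. intros Hp H. apply Nat.lt_le_trans with (countN (S i) P).
  simpl; rewrite Hp; lia. apply countN_mono; lia. Qed.

Lemma countN_le P n : (countN n P <= n)%nat.
Proof. induction n; simpl; [lia|destruct (P n); lia]. Qed.

Lemma countN_compl P n : (countN n P + countN n (fun j => negb (P j)) = n)%nat.
Proof. induction n; simpl; [lia|destruct (P n); simpl; lia]. Qed.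

Lemma countN_ext P Q n : (forall i, (i < n)%nat -> P i = Q i) -> countN n P = countN n Q.
Proof. induction n; intros H; simpl; auto. rewrite IHn by (intros; apply H; lia). rewrite (H n) by lia. auto. Qed.

Lemma two_le_inv y : 0 < y -> 2 <= y + / y.
Proof. intros Hy. assert (0 <= (y - 1) * (y - 1)) by (pose proof (Rle_0_sqr (y-1)); unfold Rsqr in *; lra).
  assert (y * / y = 1) by (field; lra).
  assert (0 < / y) by (apply Rinv_0_lt_compat; lra).
  assert (0 <= ((y - 1) * (y - 1)) * / y) by (apply Rmult_le_pos; lra).
  assert (E : ((y - 1) * (y - 1)) * / y = y * (y * / y) - 2 * (y * / y) + / y) by ring.
  rewrite E in *. rewrite H0 in *. lra. Qed.

Lemma cosh_mono a b : 0 <= a -> a <= b -> cosh a <= cosh b.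
Proof. intros Ha Hab. unfold cosh.
  assert (exp a <= exp b) by (destruct (Req_dec_T a b); [subst; lra|left; apply exp_increasing; lra]).
  assert (E1 : exp (-a) = exp (-a-b) * exp b) by (rewrite <- exp_plus; f_equal; ring).
  assert (E2 : exp (-b) = exp (-a-b) * exp a) by (rewrite <- exp_plus; f_equal; ring).
  assert (exp (-a-b) <= 1).
  { rewrite <- exp_0. destruct (Req_dec_T (-a-b) 0) as [e|e]; [rewrite e; lra|left; apply exp_increasing; lra]. }
  assert (0 < exp (-a-b)) by apply exp_pos.
  rewrite E1, E2. nra. Qed.

Lemma bilin n (v : nat -> nat -> R)
  (Hc : forall i j, (i < n)%nat -> (j < n)%nat -> sumR n (fun k => v k i * v k j) = if Nat.eqb i j then 1 else 0)
  (x y : nat -> R) :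
  sumR n (fun k => sumR n (fun j => v k j * x j) * sumR n (fun l => v k l * y l)) = sumR n (fun j => x j * y j).
Proof.
  transitivity (sumR n (fun k => sumR n (fun j => sumR n (fun l => (v k j * v k l) * (x j * y l))))).
  { sext. rewrite sumR_mult_r. sext. rewrite <- sumR_scal. sext. ring. }
  rewrite sumR_swap.
  transitivity (sumR n (fun j => sumR n (fun l => sumR n (fun k => (v k j * v k l) * (x j * y l))))).
  { sext. apply sumR_swap. }
  transitivity (sumR n (fun j => sumR n (fun l => (if Nat.eqb j l then 1 else 0) * (x j * y l)))).
  { sext. sext. rewrite <- sumR_mult_r, Hc; auto. }
  sext. apply sumR_delta1; auto.
Qed.

Lemma lamc n (v : nat -> nat -> R) (lam : nat -> R) (A : nat -> nat -> R)
  (Hs : forall i j, (i < n)%nat -> (j < n)%nat -> A i j = A j i)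
  (He : forall k i, (k < n)%nat -> (i < n)%nat -> sumR n (fun j => A i j * v k j) = lam k * v k i)
  (w : nat -> R) k : (k < n)%nat ->
  lam k * sumR n (fun j => v k j * w j) = sumR n (fun i => v k i * sumR n (fun j => A i j * w j)).
Proof. intros Hk.
  rewrite <- sumR_scal.
  transitivity (sumR n (fun j => sumR n (fun i => A j i * v k i) * w j)).
  { sext. rewrite He by auto. ring. }
  transitivity (sumR n (fun j => sumR n (fun i => A j i * v k i * w j))).
  { sext. apply sumR_mult_r. }
  rewrite sumR_swap. sext. rewrite <- sumR_scal. sext. rewrite Hs by auto. ring.
Qed.

Lemma qform n (v : nat -> nat -> R) (lam : nat -> R) (A : nat -> nat -> R)
  (Hc : forall i j, (i < n)%nat -> (j < n)%nat -> sumR n (fun k => v k i * v k j) = if Nat.eqb i j then 1 else 0)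
  (Hs : forall i j, (i < n)%nat -> (j < n)%nat -> A i j = A j i)
  (He : forall k i, (k < n)%nat -> (i < n)%nat -> sumR n (fun j => A i j * v k j) = lam k * v k i)
  (w : nat -> R) :
  sumR n (fun k => lam k * (sumR n (fun j => v k j * w j) * sumR n (fun j => v k j * w j)))
  = sumR n (fun i => sumR n (fun j => A i j * w j) * w i).
Proof.
  transitivity (sumR n (fun k => sumR n (fun i => v k i * sumR n (fun j => A i j * w j)) * sumR n (fun j => v k j * w j))).
  { sext. rewrite <- (lamc n v lam A Hs He w) by auto. ring. }
  apply (bilin n v Hc (fun i => sumR n (fun j => A i j * w j)) w).
Qed.

Lemma specdec n (v : nat -> nat -> R) (lam : nat -> R) (A : nat -> nat -> R)
  (Hc : forall i j, (i < n)%nat -> (j < n)%nat -> sumR n (fun k => v k i * v k j) = if Nat.eqb i j then 1 else 0)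
  (He : forall k i, (k < n)%nat -> (i < n)%nat -> sumR n (fun j => A i j * v k j) = lam k * v k i)
  i j : (i < n)%nat -> (j < n)%nat ->
  A i j = sumR n (fun k => lam k * v k i * v k j).
Proof. intros Hi Hj.
  transitivity (sumR n (fun k => sumR n (fun l => A i l * v k l * v k j))).
  2:{ sext. rewrite <- sumR_mult_r, He; auto. }
  rewrite sumR_swap.
  transitivity (sumR n (fun l => (if Nat.eqb l j then 1 else 0) * A i l)).
  { rewrite sumR_delta2; auto. }
  sext. rewrite <- Hc by auto. rewrite sumR_mult_r. sext. ring.
Qed.

Lemma trA2 n (v : nat -> nat -> R) (lam : nat -> R) (A : nat -> nat -> R)
  (Hc : forall i j, (i < n)%nat -> (j < n)%nat -> sumR n (fun k => v k i * v k j) = if Nat.eqb i j then 1 else 0)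
  (Ho : forall k l, (k < n)%nat -> (l < n)%nat -> sumR n (fun t => v k t * v l t) = if Nat.eqb k l then 1 else 0)
  (He : forall k i, (k < n)%nat -> (i < n)%nat -> sumR n (fun j => A i j * v k j) = lam k * v k i) :
  sumR n (fun k => lam k * lam k) = sumR n (fun i => sumR n (fun j => A i j * A i j)).
Proof.
  transitivity (sumR n (fun k => sumR n (fun i => sumR n (fun j => v k j * A i j) * sumR n (fun l => v k l * A i l)))).
  { apply sumR_ext; intros k Hk. assert (H1 := Ho k k Hk Hk). rewrite Nat.eqb_refl in H1.
    rewrite <- (Rmult_1_r (lam k * lam k)). rewrite <- H1.
    rewrite <- sumR_scal. apply sumR_ext; intros i Hi.
    transitivity ((sumR n (fun j => A i j * v k j)) * (sumR n (fun j => A i j * v k j))).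
    { rewrite He by auto. ring. }
    f_equal; sext; ring. }
  rewrite sumR_swap. sext. apply (bilin n v Hc (fun j => A _ j) (fun j => A _ j)).
Qed.

Lemma reach_edge n adj i k : reach n adj i k -> k = i \/ exists j, (j < n)%nat /\ adj i j = true.
Proof. intros H; induction H; auto.
  destruct IHreach as [->|[j' Hj]]; right; eauto. Qed.

Lemma has_nbr n adj : (2 <= n)%nat -> connected n adj ->
  forall i, (i < n)%nat -> exists j, (j < n)%nat /\ adj i j = true.
Proof. intros Hn Hc i Hi.
  set (j' := if Nat.eqb i 0 then 1%nat else 0%nat).
  assert (Hj' : (j' < n)%nat /\ j' <> i).
  { unfold j'; destruct (Nat.eqb_spec i 0); lia. }
  destruct (reach_edge n adj i j' (Hc i j' Hi (proj1 Hj'))) as [E|E]; auto. lia. Qed.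

Lemma deg_INR n adj i : INR (deg n adj i) = sumR n (fun j => adjmat adj i j).
Proof. unfold deg, adjmat. apply INR_countN. Qed.

Lemma edges_INR n adj : INR (num_edges n adj) = sumR n (fun i => sumR i (fun j => adjmat adj j i)).
Proof. unfold num_edges. rewrite INR_sumN. sext. rewrite INR_countN. auto. Qed.

Lemma adjmat_sym n adj : is_graph n adj -> forall i j, (i < n)%nat -> (j < n)%nat ->
  adjmat adj i j = adjmat adj j i.
Proof. intros [Hs _] i j Hi Hj. unfold adjmat. rewrite Hs; auto. Qed.

Lemma adjmat_diag n adj : is_graph n adj -> forall i, (i < n)%nat -> adjmat adj i i = 0.
Proof. intros [_ Hd] i Hi. unfold adjmat. rewrite Hd; auto. Qed.

Lemma adjmat_nonneg adj i j : 0 <= adjmat adj i j.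
Proof. unfold adjmat; destruct (adj i j); lra. Qed.

Lemma deg_ge1 n adj i j : (j < n)%nat -> adj i j = true -> 1 <= INR (deg n adj i).
Proof. intros Hj Ha. rewrite deg_INR.
  replace 1 with (adjmat adj i j) by (unfold adjmat; rewrite Ha; auto).
  apply (sumR_ge_term n (fun j => adjmat adj i j)); auto. intros; apply adjmat_nonneg. Qed.

Lemma mu_bound n adj lam (v : nat -> nat -> R) :
  is_graph n adj -> (2 <= n)%nat -> connected n adj ->
  (forall i j, (i < n)%nat -> (j < n)%nat -> sumR n (fun k => v k i * v k j) = if Nat.eqb i j then 1 else 0) ->
  (forall k i, (k < n)%nat -> (i < n)%nat -> sumR n (fun j => adjmat adj i j * v k j) = lam k * v k i) ->
  forall k0, (k0 < n)%nat -> (forall k, (k < n)%nat -> lam k <= lam k0) ->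
  0 < INR (num_edges n adj) / randic n adj /\ INR (num_edges n adj) / randic n adj <= lam k0.
Proof.
  intros Hg Hn Hconn Hc He k0 Hk0 Hmax.
  pose proof (adjmat_sym n adj Hg) as Hs.
  pose proof (adjmat_diag n adj Hg) as Hd.
  set (d := fun i => INR (deg n adj i)).
  set (A := adjmat adj).
  destruct (has_nbr n adj Hn Hconn 0%nat ltac:(lia)) as [j0 [Hj0 Haj0]].
  set (T := sumR n (fun i => sumR n (fun j => A i j))).
  assert (HT : T = 2 * INR (num_edges n adj)).
  { unfold T. rewrite edges_INR. apply sumR_sym2; auto. }
  set (g := fun i j => if adj i j then / sqrt (d i * d j) else 0).
  set (R2 := sumR n (fun i => sumR n (fun j => g i j))).
  assert (HR : R2 = 2 * randic n adj).
  { unfold R2. rewrite sumR_sym2.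
    - f_equal. unfold randic. apply sumR_ext; intros i Hi. apply sumR_ext; intros j Hj.
      unfold g, d. rewrite Rmult_comm. auto.
    - intros i j Hi Hj. unfold g. destruct Hg as [Hsy _]. rewrite Hsy by auto. rewrite Rmult_comm; auto.
    - intros i Hi. unfold g. destruct Hg as [_ Hdi]. rewrite Hdi; auto. }
  assert (HT0 : 0 < T).
  { assert (1 <= T); [|lra].
    apply Rle_trans with (sumR n (fun j => A 0%nat j)).
    - replace 1 with (A 0%nat j0) by (unfold A, adjmat; rewrite Haj0; auto).
      apply (sumR_ge_term n (fun j => A 0%nat j)); auto. intros; apply adjmat_nonneg.
    - apply (sumR_ge_term n (fun i => sumR n (fun j => A i j))); [|lia].
      intros; apply sumR_nonneg; intros; apply adjmat_nonneg. }
  assert (Hdpos : forall i j, (i < n)%nat -> (j < n)%nat -> adj i j = true -> 1 <= d i /\ 1 <= d j).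
  { intros i j Hi Hj Ha. split; [apply (deg_ge1 n adj i j); auto|].
    apply (deg_ge1 n adj j i); auto. destruct Hg as [Hsy _]. rewrite Hsy; auto. }
  assert (Hg0 : forall i j, (i < n)%nat -> (j < n)%nat -> 0 <= g i j).
  { intros i j Hi Hj. unfold g. destruct (adj i j) eqn:Ea; [|lra].
    destruct (Hdpos i j Hi Hj Ea). left. apply Rinv_0_lt_compat, sqrt_lt_R0. nra. }
  assert (HR0 : 0 < R2).
  { apply Rlt_le_trans with (sumR n (fun j => g 0%nat j)).
    - apply Rlt_le_trans with (g 0%nat j0).
      + unfold g. rewrite Haj0. destruct (Hdpos 0%nat j0 ltac:(lia) Hj0 Haj0).
        apply Rinv_0_lt_compat, sqrt_lt_R0. nra.
      + apply (sumR_ge_term n (fun j => g 0%nat j)); auto. intros; apply Hg0; lia.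
    - apply (sumR_ge_term n (fun i => sumR n (fun j => g i j))); [|lia].
      intros; apply sumR_nonneg; intros; apply Hg0; auto. }
  set (w := fun i => sqrt (d i)).
  assert (Hww : sumR n (fun j => w j * w j) = T).
  { unfold T. sext. unfold w. rewrite sqrt_sqrt by (unfold d; apply pos_INR).
    unfold d. rewrite deg_INR. auto. }
  set (S2 := sumR n (fun i => sumR n (fun j => A i j * w j) * w i)).
  assert (HS2 : S2 <= lam k0 * T).
  { unfold S2. rewrite <- (qform n v lam A Hc Hs He w).
    rewrite <- Hww, <- (bilin n v Hc w w), <- sumR_scal.
    apply sumR_le; intros k Hk. apply Rmult_le_compat_r; [|auto].
    apply Rle_0_sqr. }
  set (t := R2 / T).
  assert (Ht : 0 < t) by (unfold t; apply Rdiv_lt_0_compat; auto).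
  assert (Hpt : forall i j, (i < n)%nat -> (j < n)%nat ->
     2 * A i j <= t * (A i j * w j * w i) + / t * g i j).
  { intros i j Hi Hj. unfold A, adjmat, g. destruct (adj i j) eqn:Ea.
    - destruct (Hdpos i j Hi Hj Ea) as [Hdi Hdj].
      assert (0 < w i) by (unfold w; apply sqrt_lt_R0; lra).
      assert (0 < w j) by (unfold w; apply sqrt_lt_R0; lra).
      rewrite sqrt_mult by lra. fold (w i) (w j).
      replace (/ t * / (w i * w j)) with (/ (t * (1 * w j * w i))) by (field; lra).
      pose proof (two_le_inv (t * (1 * w j * w i))). assert (0 < t * (1 * w j * w i)).
      { apply Rmult_lt_0_compat; auto. nra. } lra.
    - assert (0 < / t) by (apply Rinv_0_lt_compat; auto). nra. }
  assert (Hsum : 2 * T <= t * S2 + / t * R2).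
  { apply Rle_trans with (sumR n (fun i => sumR n (fun j => t * (A i j * w j * w i) + / t * g i j))).
    - unfold T. rewrite <- sumR_scal. apply sumR_le; intros i Hi.
      rewrite <- sumR_scal. apply sumR_le; intros j Hj. apply Hpt; auto.
    - right. transitivity (sumR n (fun i => t * sumR n (fun j => A i j * w j * w i) + / t * sumR n (fun j => g i j))).
      { sext. rewrite sumR_plus, !sumR_scal. auto. }
      rewrite sumR_plus, !sumR_scal.
      assert (ES : sumR n (fun i => sumR n (fun j => A i j * w j * w i)) = S2)
        by (unfold S2; sext; rewrite sumR_mult_r; auto).
      rewrite ES. auto. }
  assert (E : / t * R2 = T) by (unfold t; field; lra).
  assert (HM : T <= R2 * lam k0).
  { assert (t * S2 <= t * (lam k0 * T)) by (apply Rmult_le_compat_l; lra).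
    replace (t * (lam k0 * T)) with (R2 * lam k0) in H by (unfold t; field; lra). lra. }
  assert (Hrand : 0 < randic n adj) by lra.
  assert (Hm : 0 < INR (num_edges n adj)) by lra.
  split.
  - apply Rdiv_lt_0_compat; auto.
  - replace (INR (num_edges n adj) / randic n adj) with (T / R2) by (rewrite HT, HR; field; lra).
    apply Rmult_le_reg_r with R2; auto. unfold Rdiv. rewrite Rmult_assoc, Rinv_l by lra. lra.
Qed.

Lemma argmax n (f : nat -> R) : (1 <= n)%nat -> exists k0, (k0 < n)%nat /\ forall k, (k < n)%nat -> f k <= f k0.
Proof. induction n; intros H; [lia|].
  destruct (Nat.eq_dec n 0) as [->|Hn].
  - exists 0%nat; split; [lia|]. intros k Hk. replace k with 0%nat by lia. lra.
  - destruct IHn as [k0 [Hk0 Hm]]; [lia|].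
    destruct (Rle_dec (f n) (f k0)).
    + exists k0; split; [lia|]. intros k Hk. destruct (Nat.eq_dec k n) as [->|]; auto. apply Hm; lia.
    + exists n; split; [lia|]. intros k Hk. destruct (Nat.eq_dec k n) as [->|]; [lra|].
      assert (f k <= f k0) by (apply Hm; lia). lra.
Qed.

Lemma sumR_minus n f g : sumR n (fun i => f i - g i) = sumR n f - sumR n g.
Proof. induction n; simpl; [lra|rewrite IHn; lra]. Qed.

Lemma pairing n adj lam (v : nat -> nat -> R) :
  is_graph n adj -> bipartite n adj ->
  (forall k l, (k < n)%nat -> (l < n)%nat -> sumR n (fun t => v k t * v l t) = if Nat.eqb k l then 1 else 0) ->
  (forall i j, (i < n)%nat -> (j < n)%nat -> sumR n (fun k => v k i * v k j) = if Nat.eqb i j then 1 else 0) ->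
  (forall k i, (k < n)%nat -> (i < n)%nat -> sumR n (fun j => adjmat adj i j * v k j) = lam k * v k i) ->
  forall k0, (k0 < n)%nat -> 0 < lam k0 ->
  exists k1, (k1 < n)%nat /\ k1 <> k0 /\ lam k1 = - lam k0.
Proof.
  intros Hg [col Hcol] Ho Hc He k0 Hk0 HM.
  pose proof (adjmat_sym n adj Hg) as Hs.
  set (M := lam k0).
  set (s := fun i => if col i then 1 else -1).
  set (w := fun i => s i * v k0 i).
  assert (Hw : forall i, (i < n)%nat -> sumR n (fun j => adjmat adj i j * w j) = - M * w i).
  { intros i Hi.
    transitivity (sumR n (fun j => (- s i) * (adjmat adj i j * v k0 j))).
    { apply sumR_ext; intros j Hj. unfold w, s, adjmat. destruct (adj i j) eqn:Ea; [|ring].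
      pose proof (Hcol i j Hi Hj Ea). destruct (col i), (col j); try congruence; ring. }
    rewrite sumR_scal, He by auto. unfold w, M. ring. }
  set (c := fun k => sumR n (fun j => v k j * w j)).
  assert (Hlc : forall k, (k < n)%nat -> lam k * c k = - M * c k).
  { intros k Hk. unfold c. rewrite (lamc n v lam (adjmat adj) Hs He w k Hk).
    rewrite <- sumR_scal. apply sumR_ext; intros i Hi. rewrite Hw by auto. ring. }
  assert (Hcc : sumR n (fun k => c k * c k) = 1).
  { unfold c. rewrite (bilin n v Hc w w).
    assert (H1 := Ho k0 k0 Hk0 Hk0). rewrite Nat.eqb_refl in H1. rewrite <- H1.
    apply sumR_ext; intros j Hj. unfold w, s. destruct (col j); ring. }
  assert (Hc0 : c k0 = 0).
  { pose proof (Hlc k0 Hk0) as H. unfold M in H.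
    assert (lam k0 * c k0 = 0) by lra.
    destruct (Rmult_integral _ _ H0); [lra|auto]. }
  destruct (sumR_nz n (fun k => c k * c k)) as [k1 [Hk1 Hnz]]; [lra|].
  exists k1. split; auto. split.
  - intros ->. rewrite Hc0 in Hnz. lra.
  - assert (c k1 <> 0) by (intro E; rewrite E in Hnz; lra).
    pose proof (Hlc k1 Hk1).
    apply Rmult_eq_reg_r with (c k1); auto.
Qed.

Definition gfun (lam : nat -> R) k0 k1 M k :=
  1 + lam k + (if Nat.eqb k0 k then exp M - 1 - M else 0) + (if Nat.eqb k1 k then exp (-M) - 1 + M else 0).

Lemma gfun_le n lam k0 k1 M : k0 <> k1 -> lam k0 = M -> lam k1 = - M ->
  forall k, (k < n)%nat -> gfun lam k0 k1 M k <= exp (lam k).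
Proof. intros Hne H0 H1 k Hk. unfold gfun.
  destruct (Nat.eqb_spec k0 k) as [e0|e0]; destruct (Nat.eqb_spec k1 k) as [e1|e1].
  - congruence.
  - rewrite <- e0, H0. lra.
  - rewrite <- e1, H1. lra.
  - pose proof (exp_ineq1_le (lam k)). lra.
Qed.

Lemma gfun_sum n lam k0 k1 M : (k0 < n)%nat -> (k1 < n)%nat -> sumR n lam = 0 ->
  sumR n (gfun lam k0 k1 M) = 2 * cosh M + INR n - 2.
Proof. intros H0 H1 Hs. unfold gfun.
  rewrite !sumR_plus, sumR_const, Hs, !sumR_delta by auto. unfold cosh. lra. Qed.

Lemma trace0 n adj lam (v : nat -> nat -> R) :
  is_graph n adj ->
  (forall k l, (k < n)%nat -> (l < n)%nat -> sumR n (fun t => v k t * v l t) = if Nat.eqb k l then 1 else 0) ->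
  (forall i j, (i < n)%nat -> (j < n)%nat -> sumR n (fun k => v k i * v k j) = if Nat.eqb i j then 1 else 0) ->
  (forall k i, (k < n)%nat -> (i < n)%nat -> sumR n (fun j => adjmat adj i j * v k j) = lam k * v k i) ->
  sumR n lam = 0.
Proof. intros Hg Ho Hc He.
  transitivity (sumR n (fun k => lam k * sumR n (fun i => v k i * v k i))).
  { apply sumR_ext; intros k Hk. rewrite Ho by auto. rewrite Nat.eqb_refl. ring. }
  transitivity (sumR n (fun k => sumR n (fun i => lam k * v k i * v k i))).
  { apply sumR_ext; intros k Hk. rewrite <- sumR_scal. apply sumR_ext; intros; ring. }
  rewrite sumR_swap. rewrite <- (sumR_zero n). apply sumR_ext; intros i Hi.
  rewrite <- (specdec n v lam (adjmat adj) Hc He i i Hi Hi). apply (adjmat_diag n adj Hg); auto.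
Qed.

Lemma build_iso n adj (sg : nat -> bool) :
  (forall i j, (i < n)%nat -> (j < n)%nat -> adj i j = xorb (sg i) (sg j)) ->
  (exists i, (i < n)%nat /\ sg i = true) -> (exists j, (j < n)%nat /\ sg j = false) ->
  iso_complete_bipartite n adj.
Proof.
  intros Hadj [i1 [Hi1 Hs1]] [j1 [Hj1 Hs2]].
  set (Q := fun j => negb (sg j)).
  set (p := countN n sg). set (q := countN n Q).
  assert (Hc := countN_compl sg n). fold Q p q in Hc.
  assert (HP : forall i, (i < n)%nat -> sg i = true -> (countN i sg < p)%nat).
  { intros i Hi Hs. apply countN_strict; auto. }
  assert (HQ : forall i, (i < n)%nat -> sg i = false -> (countN i Q < q)%nat).
  { intros i Hi Hs. apply countN_strict; auto. unfold Q; rewrite Hs; auto. }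
  exists p, q. split; [specialize (HP i1 Hi1 Hs1); lia|].
  split; [specialize (HQ j1 Hj1 Hs2); lia|]. split; [lia|].
  set (f := fun i => if sg i then countN i sg else (p + countN i Q)%nat).
  assert (Hlt : forall i, (i < n)%nat -> Nat.ltb (f i) p = sg i).
  { intros i Hi. unfold f. destruct (sg i) eqn:E.
    - apply Nat.ltb_lt. auto.
    - apply Nat.ltb_ge. lia. }
  exists f. split; [|split].
  - intros i Hi. unfold f. destruct (sg i) eqn:E.
    + specialize (HP i Hi E). lia.
    + specialize (HQ i Hi E). lia.
  - intros i j Hi Hj Hf.
    pose proof (Hlt i Hi) as Li. pose proof (Hlt j Hj) as Lj.
    rewrite Hf in Li. rewrite Li in Lj.
    unfold f in Hf. destruct (sg i) eqn:Ei; rewrite <- Lj in Hf.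
    + destruct (Nat.lt_trichotomy i j) as [H|[H|H]]; auto.
      * pose proof (countN_strict sg i j Ei H). lia.
      * pose proof (countN_strict sg j i (eq_trans (eq_sym Lj) eq_refl) H). lia.
    + destruct (Nat.lt_trichotomy i j) as [H|[H|H]]; auto.
      * assert (Q i = true) by (unfold Q; rewrite Ei; auto).
        pose proof (countN_strict Q i j H0 H). lia.
      * assert (Q j = true) by (unfold Q; rewrite <- Lj; auto).
        pose proof (countN_strict Q j i H0 H). lia.
  - intros i j Hi Hj. unfold Kpq_adj. rewrite !Hlt by auto. auto.
Qed.

Lemma eq_struct n adj (a b : nat -> R) M :
  is_graph n adj -> (2 <= n)%nat -> connected n adj -> 0 < M ->
  (forall i j, (i < n)%nat -> (j < n)%nat -> adjmat adj i j = M * a i * a j - M * b i * b j) ->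
  iso_complete_bipartite n adj.
Proof.
  intros Hg Hn Hconn HM H.
  assert (Hsq : forall i, (i < n)%nat -> b i * b i = a i * a i).
  { intros i Hi. pose proof (H i i Hi Hi) as E. rewrite (adjmat_diag n adj Hg i Hi) in E.
    assert (M * (a i * a i - b i * b i) = 0) by (rewrite E; ring).
    destruct (Rmult_integral _ _ H0); lra. }
  assert (Hnz : forall i, (i < n)%nat -> a i <> 0).
  { intros i Hi Ha. destruct (has_nbr n adj Hn Hconn i Hi) as [j [Hj Haj]].
    pose proof (H i j Hi Hj) as E. unfold adjmat in E. rewrite Haj in E.
    pose proof (Hsq i Hi) as Hb. rewrite Ha in Hb.
    assert (b i = 0) by (destruct (Rmult_integral _ _ (eq_trans Hb (Rmult_0_l 0))); auto).
    rewrite Ha, H0 in E. lra. }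
  set (sg := fun i => if Req_dec_T (b i) (a i) then true else false).
  assert (Hneg : forall i, (i < n)%nat -> b i <> a i -> b i = - a i).
  { intros i Hi Hne. pose proof (Hsq i Hi).
    assert ((b i - a i) * (b i + a i) = 0) by (ring_simplify; lra).
    destruct (Rmult_integral _ _ H1) as [e|e]; lra. }
  assert (Hadj : forall i j, (i < n)%nat -> (j < n)%nat -> adj i j = xorb (sg i) (sg j)).
  { intros i j Hi Hj. pose proof (H i j Hi Hj) as E. unfold adjmat in E.
    assert (Hp : M * a i * a j <> 0).
    { apply Rmult_integral_contrapositive_currified; [apply Rmult_integral_contrapositive_currified|]; auto; lra. }
    unfold sg. destruct (Req_dec_T (b i) (a i)) as [ei|ei]; destruct (Req_dec_T (b j) (a j)) as [ej|ej]; simpl.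
    - rewrite ei, ej in E. destruct (adj i j); lra.
    - rewrite ei, (Hneg j Hj ej) in E.
      replace (M * a i * a j - M * a i * - a j) with (2 * (M * a i * a j)) in E by ring.
      destruct (adj i j); auto. lra.
    - rewrite ej, (Hneg i Hi ei) in E.
      replace (M * a i * a j - M * - a i * a j) with (2 * (M * a i * a j)) in E by ring.
      destruct (adj i j); auto. lra.
    - rewrite (Hneg j Hj ej), (Hneg i Hi ei) in E.
      replace (M * a i * a j - M * - a i * - a j) with 0 in E by ring.
      destruct (adj i j); auto. lra. }
  destruct (has_nbr n adj Hn Hconn 0%nat ltac:(lia)) as [j0 [Hj0 Haj0]].
  rewrite Hadj in Haj0 by (auto; lia).
  apply (build_iso n adj sg Hadj).
  - destruct (sg 0%nat) eqn:E; [exists 0%nat; split; [lia|auto]|].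
    exists j0; split; [auto|]. destruct (sg j0); simpl in Haj0; congruence.
  - destruct (sg 0%nat) eqn:E; [|exists 0%nat; split; [lia|auto]].
    exists j0; split; [auto|]. destruct (sg j0); simpl in Haj0; congruence.
Qed.

Lemma sum_if_bool n (sg : nat -> bool) x y :
  sumR n (fun i => if sg i then x else y) = INR (countN n sg) * x + INR (countN n (fun j => negb (sg j))) * y.
Proof. rewrite !INR_countN, !sumR_mult_r, <- sumR_plus. apply sumR_ext; intros i Hi.
  destruct (sg i); simpl; ring. Qed.

Lemma converse n adj lam (v : nat -> nat -> R) :
  is_graph n adj -> (2 <= n)%nat -> connected n adj ->
  (forall k l, (k < n)%nat -> (l < n)%nat -> sumR n (fun t => v k t * v l t) = if Nat.eqb k l then 1 else 0) ->
  (forall i j, (i < n)%nat -> (j < n)%nat -> sumR n (fun k => v k i * v k j) = if Nat.eqb i j then 1 else 0) ->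
  (forall k i, (k < n)%nat -> (i < n)%nat -> sumR n (fun j => adjmat adj i j * v k j) = lam k * v k i) ->
  iso_complete_bipartite n adj ->
  estrada n lam = 2 * cosh (INR (num_edges n adj) / randic n adj) + INR (n - 2).
Proof.
  intros Hg Hn Hconn Ho Hc He [p [q [Hp [Hq [Hpq [f [Hf1 [Hf2 Hf3]]]]]]]].
  set (sg := fun i => Nat.ltb (f i) p).
  assert (Hadj : forall i j, (i < n)%nat -> (j < n)%nat -> adj i j = xorb (sg i) (sg j)).
  { intros i j Hi Hj. rewrite Hf3 by auto. unfold Kpq_adj, sg. auto. }
  set (Nt := INR (countN n sg)). set (Nf := INR (countN n (fun j => negb (sg j)))).
  assert (Hdeg : forall i, (i < n)%nat -> INR (deg n adj i) = if sg i then Nf else Nt).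
  { intros i Hi. unfold deg. rewrite (countN_ext _ (fun j => xorb (sg i) (sg j))) by (intros; apply Hadj; auto).
    unfold Nt, Nf. destruct (sg i); f_equal; apply countN_ext; intros j Hj; destruct (sg j); auto. }
  destruct (has_nbr n adj Hn Hconn 0%nat ltac:(lia)) as [j0 [Hj0 Haj0]].
  assert (Hx := Haj0). rewrite Hadj in Hx by (auto; lia).
  assert (HNt : 1 <= Nt /\ 1 <= Nf).
  { assert (forall P i, (i < n)%nat -> P i = true -> 1 <= INR (countN n P)).
    { intros P i Hi HP. replace 1 with (INR 1) by auto. apply le_INR.
      pose proof (countN_strict P i n HP Hi). lia. }
    unfold Nt, Nf. destruct (sg 0%nat) eqn:E0; destruct (sg j0) eqn:E1; simpl in Hx; try congruence.
    - split; [apply (H sg 0%nat); auto; lia|apply (H _ j0); auto; rewrite E1; auto].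
    - split; [apply (H sg j0); auto|apply (H _ 0%nat); [lia|rewrite E0; auto]]. }
  set (c := Nt * Nf).
  assert (Hc0 : 1 <= c) by (unfold c; nra).
  set (s := sqrt c).
  assert (Hs0 : 0 < s) by (unfold s; apply sqrt_lt_R0; lra).
  assert (Hss : s * s = c) by (unfold s; apply sqrt_sqrt; lra).
  assert (Hedge : forall i j, (i < n)%nat -> (j < n)%nat -> adj i j = true ->
     INR (deg n adj i) * INR (deg n adj j) = c).
  { intros i j Hi Hj Ha. rewrite Hadj in Ha by auto. rewrite !Hdeg by auto. unfold c.
    destruct (sg i), (sg j); simpl in Ha; try congruence; ring. }
  assert (Hrand : randic n adj = / s * INR (num_edges n adj)).
  { rewrite edges_INR. unfold randic. rewrite <- sumR_scal. apply sumR_ext; intros i Hi.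
    rewrite <- sumR_scal. apply sumR_ext; intros j Hj. unfold adjmat.
    destruct (adj j i) eqn:Ea; [|ring].
    assert (adj i j = true) by (destruct Hg as [Hsy _]; rewrite Hsy by lia; auto).
    rewrite Hedge by (auto; lia). fold s. ring. }
  assert (Hm : 1 <= INR (num_edges n adj)).
  { rewrite edges_INR.
    assert (Hj0n : j0 <> 0%nat) by (intro e; subst; destruct Hg as [_ Hd]; rewrite Hd in Haj0; [discriminate|lia]).
    apply Rle_trans with (sumR j0 (fun j => adjmat adj j j0)).
    - replace 1 with (adjmat adj 0%nat j0) by (unfold adjmat; rewrite Haj0; auto).
      apply (sumR_ge_term j0 (fun j => adjmat adj j j0)); [intros; apply adjmat_nonneg|lia].
    - apply (sumR_ge_term n (fun i => sumR i (fun j => adjmat adj j i))); auto.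
      intros; apply sumR_nonneg; intros; apply adjmat_nonneg. }
  assert (Hmu : INR (num_edges n adj) / randic n adj = s).
  { rewrite Hrand. field. split; lra. }
  rewrite Hmu.
  assert (Hev : forall k, (k < n)%nat -> lam k = 0 \/ lam k * lam k = c).
  { intros k Hk.
    set (Tt := sumR n (fun j => if sg j then v k j else 0)).
    set (Tf := sumR n (fun j => if sg j then 0 else v k j)).
    assert (HAv : forall i, (i < n)%nat -> lam k * v k i = if sg i then Tf else Tt).
    { intros i Hi. rewrite <- He by auto. unfold Tt, Tf.
      destruct (sg i) eqn:Ei; apply sumR_ext; intros j Hj; unfold adjmat; rewrite Hadj by auto;
        rewrite Ei; destruct (sg j); simpl; ring. }
    assert (H1 : lam k * Tt = Nt * Tf).
    { unfold Tt. rewrite <- sumR_scal.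
      transitivity (sumR n (fun j => (if sg j then 1 else 0) * Tf)).
      { apply sumR_ext; intros j Hj. pose proof (HAv j Hj). destruct (sg j); [rewrite H; ring|ring]. }
      rewrite <- sumR_mult_r. unfold Nt. rewrite INR_countN. auto. }
    assert (H2 : lam k * Tf = Nf * Tt).
    { unfold Tf. rewrite <- sumR_scal.
      transitivity (sumR n (fun j => (if negb (sg j) then 1 else 0) * Tt)).
      { apply sumR_ext; intros j Hj. pose proof (HAv j Hj). destruct (sg j); simpl; [ring|rewrite H; ring]. }
      rewrite <- sumR_mult_r. unfold Nf. rewrite INR_countN. auto. }
    destruct (Req_dec_T (lam k) 0) as [e|e]; [left; auto|right].
    destruct (Req_dec_T (lam k * lam k) c) as [e2|e2]; auto. exfalso.
    assert (E1 : (lam k * lam k - c) * Tt = 0).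
    { transitivity (lam k * (lam k * Tt) - c * Tt); [ring|]. rewrite H1.
      transitivity (Nt * (lam k * Tf) - c * Tt); [ring|]. rewrite H2. unfold c; ring. }
    assert (E2 : (lam k * lam k - c) * Tf = 0).
    { transitivity (lam k * (lam k * Tf) - c * Tf); [ring|]. rewrite H2.
      transitivity (Nf * (lam k * Tt) - c * Tf); [ring|]. rewrite H1. unfold c; ring. }
    assert (Tt = 0) by (destruct (Rmult_integral _ _ E1); auto; lra).
    assert (Tf = 0) by (destruct (Rmult_integral _ _ E2); auto; lra).
    assert (Hv0 : forall i, (i < n)%nat -> v k i = 0).
    { intros i Hi. pose proof (HAv i Hi). rewrite H, H0 in H3. destruct (sg i);
      destruct (Rmult_integral _ _ H3); auto; lra. }
    pose proof (Ho k k Hk Hk) as Hn1. rewrite Nat.eqb_refl in Hn1.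
    rewrite (sumR_ext n _ (fun _ => 0)) in Hn1 by (intros i Hi; rewrite Hv0 by auto; ring).
    rewrite sumR_zero in Hn1. lra. }
  set (X := sinh s / s). set (Y := (cosh s - 1) / (s * s)).
  assert (Hpt : forall k, (k < n)%nat -> exp (lam k) = 1 + lam k * X + lam k * lam k * Y).
  { intros k Hk. destruct (Hev k Hk) as [e|e].
    - rewrite e, exp_0. ring.
    - assert ((lam k - s) * (lam k + s) = 0) by (transitivity (lam k * lam k - s * s); [ring|rewrite e, Hss; ring]).
      unfold X, Y, sinh, cosh.
      destruct (Rmult_integral _ _ H) as [e1|e1].
      + replace (lam k) with s by lra. field. lra.
      + replace (lam k) with (- s) by lra. replace (- - s) with s by ring. field. lra. }
  assert (Htr := trace0 n adj lam v Hg Ho Hc He).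
  assert (Htr2 : sumR n (fun k => lam k * lam k) = 2 * c).
  { rewrite (trA2 n v lam (adjmat adj) Hc Ho He).
    transitivity (sumR n (fun i => if sg i then Nf else Nt)).
    { apply sumR_ext; intros i Hi. rewrite <- Hdeg, deg_INR by auto. apply sumR_ext; intros j Hj.
      unfold adjmat. destruct (adj i j); ring. }
    rewrite sum_if_bool. fold Nt Nf. unfold c. ring. }
  unfold estrada. rewrite (sumR_ext n _ (fun k => 1 + lam k * X + lam k * lam k * Y)) by auto.
  rewrite !sumR_plus, sumR_const, <- !sumR_mult_r. rewrite Htr, Htr2.
  rewrite minus_INR by auto. unfold Y. replace (INR 2) with 2 by (simpl; ring).
  rewrite <- Hss. field. lra.
Qed.

Theorem mainTheorem8 (n : nat) (adj : nat -> nat -> bool) (lam : nat -> R) :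
  is_graph n adj -> (2 <= n)%nat -> connected n adj -> bipartite n adj ->
  adj_spectrum n adj lam ->
  estrada n lam >= 2 * cosh (INR (num_edges n adj) / randic n adj) + INR (n - 2)
  /\
  (estrada n lam = 2 * cosh (INR (num_edges n adj) / randic n adj) + INR (n - 2)
     <-> iso_complete_bipartite n adj).
Proof.
  intros Hg Hn Hconn Hbip [v [Ho He]].
  assert (Hc := Compl.complete n v Ho).
  destruct (argmax n lam ltac:(lia)) as [k0 [Hk0 Hmax]].
  destruct (mu_bound n adj lam v Hg Hn Hconn Hc He k0 Hk0 Hmax) as [Hmu0 HmuM].
  set (mu := INR (num_edges n adj) / randic n adj) in *.
  set (M := lam k0) in *.
  assert (HM0 : 0 < M) by lra.
  destruct (pairing n adj lam v Hg Hbip Ho Hc He k0 Hk0 HM0) as [k1 [Hk1 [Hne Hl1]]].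
  fold M in Hl1.
  assert (Htr := trace0 n adj lam v Hg Ho Hc He).
  assert (Hle := gfun_le n lam k0 k1 M (not_eq_sym Hne) eq_refl Hl1).
  assert (Hsum := gfun_sum n lam k0 k1 M Hk0 Hk1 Htr).
  assert (HEE : sumR n (gfun lam k0 k1 M) <= estrada n lam).
  { unfold estrada. apply sumR_le. auto. }
  assert (Hcosh : cosh mu <= cosh M) by (apply cosh_mono; lra).
  assert (Hn2 : INR (n - 2) = INR n - 2) by (rewrite minus_INR by auto; simpl; ring).
  rewrite Hn2.
  split; [lra|]. split.
  - intros Heq.
    assert (Hz : sumR n (fun k => exp (lam k) - gfun lam k0 k1 M k) = 0).
    { rewrite sumR_minus. unfold estrada in *. lra. }
    assert (Hnn : forall k, (k < n)%nat -> 0 <= exp (lam k) - gfun lam k0 k1 M k)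
      by (intros k Hk; pose proof (Hle k Hk); lra).
    assert (Hzk := sumR_eq0 n _ Hnn Hz).
    assert (Hoth : forall k, (k < n)%nat -> k <> k0 -> k <> k1 -> lam k = 0).
    { intros k Hk H0 H1. pose proof (Hzk k Hk) as E. unfold gfun in E.
      replace (Nat.eqb k0 k) with false in E by (symmetry; apply Nat.eqb_neq; auto).
      replace (Nat.eqb k1 k) with false in E by (symmetry; apply Nat.eqb_neq; auto).
      destruct (Req_dec_T (lam k) 0) as [e|e]; auto.
      pose proof (exp_ineq1 _ e). lra. }
    apply (eq_struct n adj (v k0) (v k1) M Hg Hn Hconn ltac:(lra)).
    intros i j Hi Hj.
    rewrite (specdec n v lam (adjmat adj) Hc He i j Hi Hj).
    transitivity (sumR n (fun k => (if Nat.eqb k0 k then M * v k0 i * v k0 j else 0)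
                               + (if Nat.eqb k1 k then - M * v k1 i * v k1 j else 0))).
    { apply sumR_ext; intros k Hk.
      destruct (Nat.eqb_spec k0 k) as [e0|e0]; destruct (Nat.eqb_spec k1 k) as [e1|e1].
      - congruence.
      - rewrite <- e0. fold M. ring.
      - rewrite <- e1, Hl1. ring.
      - rewrite Hoth by auto. ring. }
    rewrite sumR_plus, !sumR_delta by auto. ring.
  - intros Hiso. rewrite <- Hn2.
    apply (converse n adj lam v Hg Hn Hconn Ho Hc He Hiso).
Qed.
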